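(* Let $c_1\ge\dots\ge c_{m+1}\ge0$ and $d_1\ge\dots\ge d_m\ge0$ be integers, let $(r_1,r_2,\dots)$ and $(s_1,s_2,\dots)$ be the conjugate partitions of $(c_1,\dots,c_{m+1})$ and $(d_1,\dots,d_m)$, $r_0=m+1=s_0+1$, $\mathbf r=(r_0,r_1,\dots)$, $\mathbf s=(s_0,s_1,\dots)$. Then $\mathtt c=(c_1,\dots,c_{m+1})\prec'\mathtt d=(d_1,\dots,d_m)$ if and only if $\mathbf s\angle\mathbf r$.
   Context: Conjugate of $(a_1,\dots,a_n)$ (nonincreasing, nonnegative): $(\bar a_1,\bar a_2,\dots)$, $\bar a_k=\#\{i:a_i\ge k\}$. 1step-majorization: for integer chains $\mathtt d=(d_1,\dots,d_m)$ and $\mathtt c=(c_1,\dots,c_{m+1})$ (nonincreasing), $\mathtt c\prec'\mathtt d$ means $d_i=c_{i+1}$ for all $h\le i\le m$, where $h=\min\{i: d_i<c_i\}$ with $d_{m+1}=-\infty$. Conjugate majorization: for nonincreasing nonnegative sequences $\mathbf r=(r_0,r_1,\dots)$, $\mathbf s=(s_0,s_1,\dots)$, $\mathbf s\angle\mathbf r$ means $r_0=s_0+1$ and $r_i=s_i+1$ for $0\le i\le g$, where $g=\max\{i: r_i>s_i\}$. *)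

(* Defs.v *)
From mathcomp Require Import all_boot.
Set Implicit Arguments. Unset Strict Implicit. Unset Printing Implicit Defensive.

(* 1-based access to a finite integer chain: at1 s i = s_i for 1 <= i <= size s. *)
Definition at1 (s : seq nat) (i : nat) : nat := nth 0 s i.-1.

(* Extended conjugate sequence (a_0-bar, a_1-bar, ...): index 0 is the length
   of the chain (so r_0 = m+1 for c, s_0 = m for d), and for k >= 1 it is
   #{i : a_i >= k}. *)
Definition conjseq (a : seq nat) (k : nat) : nat :=
  if k == 0 then size a else count (fun x => k <= x) a.

(* h = min{i : d_i < c_i}, with d_{m+1} = -oo (so h <= m+1 always), 1-based. *)
Definition hidx (c d : seq nat) : nat :=
  (find (fun i => at1 d i.+1 < at1 c i.+1) (iota 0 (size d))).+1.

Definition onestep_maj (c d : seq nat) : Prop :=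
  forall i, hidx c d <= i <= size d -> at1 d i = at1 c i.+1.

(* Conjugate majorization  s /_ r : r_0 = s_0 + 1 and r_i = s_i + 1 for
   0 <= i <= g, where g = max{i : r_i > s_i} (g is characterised as the index
   with r_g > s_g and r_j <= s_j for all j > g). *)
Definition conj_maj (s r : nat -> nat) : Prop :=
  r 0 = s 0 + 1 /\
  exists g, [/\ s g < r g, (forall j, g < j -> r j <= s j)
              & forall i, i <= g -> r i = s i + 1].

(* Main.v *)
Require Import Defs.
From mathcomp Require Import all_boot.

Lemma cntL (s : seq nat) k : sorted geq s -> 0 < k ->
  forall j, (j < count (fun x => k <= x) s) = (k <= nth 0 s j).
Proof.
move=> + k0; elim: s => [|x s IH] /=.
  by move=> _ j; rewrite nth_nil ltn0; case: k k0.
move=> ps; have ss := path_sorted ps.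
have hd : k <= nth 0 s 0 -> k <= x.
  case: s ps {IH ss} => [|y s] /=; first by rewrite leqNgt k0.
  by case/andP => yx _ ky; apply: leq_trans ky yx.
have IH' := IH ss.
case kx: (k <= x) => /=.
  by case=> [|j] //=; rewrite add1n ltnS IH'.
have c0 : count (fun x0 => k <= x0) s = 0.
  apply/eqP; rewrite -leqn0 leqNgt IH'; apply/negP => /hd; by rewrite kx.
case=> [|j] /=; rewrite add0n c0 //.
by rewrite -IH' c0.
Qed.
Arguments cntL {s k}.

Lemma monoN (s : seq nat) i j : sorted geq s -> i <= j -> nth 0 s j <= nth 0 s i.
Proof.
move=> ss ij; case k: (nth 0 s j) => [|k'] //.
have kp : 0 < k'.+1 by [].
have H : j < count (fun x => k'.+1 <= x) s by rewrite (cntL ss kp) k.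
rewrite -(cntL ss kp i); exact: leq_ltn_trans ij H.
Qed.
Arguments monoN {s i j}.

Lemma eq_lt a b : (forall j, (j < a) = (j < b)) -> a = b.
Proof.
move=> H; apply/eqP; rewrite eqn_leq; apply/andP; split.
  by rewrite leqNgt H ltnn.
by rewrite leqNgt -H ltnn.
Qed.

Lemma le_lt a b : (forall j, j < a -> j < b) -> a <= b.
Proof. by case: a => // a H; apply: H. Qed.

Theorem proposition4p5 (m : nat) (c d : seq nat) :
  size c = m.+1 -> size d = m -> sorted geq c -> sorted geq d ->
  (onestep_maj c d <-> conj_maj (conjseq d) (conjseq c)).
Proof.
move=> szc szd sc sd.
set H0 := find (fun i => at1 d i.+1 < at1 c i.+1) (iota 0 (size d)).
have hH : hidx c d = H0.+1 by [].
have H0le : H0 <= m by rewrite -szd -(size_iota 0 (size d)) find_size.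
have Hbef : forall i, i < H0 -> nth 0 c i <= nth 0 d i.
  move=> i iH; have := before_find 0 iH.
  rewrite nth_iota; last by apply: leq_trans iH _; rewrite szd.
  by rewrite /at1 /= add0n => /negbT; rewrite -leqNgt.
have Hat : H0 < m -> nth 0 d H0 < nth 0 c H0.
  move=> Hm; have := nth_find 0 (a := fun i => at1 d i.+1 < at1 c i.+1) (s := iota 0 (size d)).
  have Hm2 : H0 < size d by rewrite szd.
  rewrite has_find size_iota -/H0 => /(_ Hm2).
  rewrite nth_iota; last by rewrite szd.
  by rewrite /at1 /= add0n.
have Rk : forall k, 0 < k -> conjseq c k = count (fun x => k <= x) c.
  by case=> [|k] // _; rewrite /conjseq.
have Sk : forall k, 0 < k -> conjseq d k = count (fun x => k <= x) d.
  by case=> [|k] // _; rewrite /conjseq.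
have cbig : forall j, m < j -> nth 0 c j = 0.
  by move=> j jm; rewrite nth_default // szc.
have dbig : forall j, m <= j -> nth 0 d j = 0.
  by move=> j jm; rewrite nth_default // szd.
split.
- move=> om.
  have om' : forall j, H0 <= j < m -> nth 0 d j = nth 0 c j.+1.
    move=> j /andP [a b]; have := om j.+1; rewrite hH ltnS a szd b /at1 /=.
    by apply.
  set g := nth 0 c H0.
  have Hc : forall i, i <= g -> conjseq c i = conjseq d i + 1.
    case=> [|k] kg; first by rewrite /conjseq /= szc szd addn1.
    rewrite Rk // Sk //; apply: eq_lt => j.
    rewrite (cntL sc) //; case: j => [|j].
      rewrite addn1 ltn0Sn; apply: leq_trans kg _; exact: monoN.
    rewrite addn1 ltnS (cntL sd) //.
    case: (ltnP j H0) => jH.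
      have e1 : k.+1 <= nth 0 c j.+1 by apply: leq_trans kg (monoN sc jH).
      have e2 : k.+1 <= nth 0 d j.
        apply: leq_trans kg _; apply: leq_trans (monoN sc (ltnW jH)) (Hbef _ jH).
      by rewrite e1 e2.
    case: (ltnP j m) => jm; first by rewrite om' ?jH.
    by rewrite cbig ?ltnS // dbig.
  split; first by rewrite /conjseq /= szc szd addn1.
  exists g; split.
  + by rewrite Hc // addn1.
  + move=> k gk; have k0 : 0 < k by apply: leq_ltn_trans gk.
    rewrite Rk // Sk //; apply: le_lt => j.
    rewrite (cntL sc) // (cntL sd) // => kc.
    case: (ltnP j H0) => jH.
      exact: leq_trans kc (Hbef _ jH).
    have := leq_trans kc (monoN sc jH); rewrite -/g leqNgt gk //.
  + exact: Hc.
- case=> _ [g [_ Hgt Hle]].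
  move=> i /andP [hi im]; rewrite hH in hi.
  case: i hi im => [|i] // hi im; rewrite /at1 /=.
  move: hi im; rewrite ltnS szd => hi im.
  have Hm : H0 < m by apply: leq_ltn_trans hi im.
  have dlt := Hat Hm.
  set k0 := nth 0 c H0.
  have k0g : k0 <= g.
    rewrite leqNgt; apply/negP => /Hgt.
    have kp : 0 < k0 by apply: leq_ltn_trans dlt.
    rewrite Rk // Sk // => H.
    have a1 : H0 < count (fun x => k0 <= x) c by rewrite (cntL sc) //.
    have a2 : count (fun x => k0 <= x) d <= H0.
      by rewrite leqNgt (cntL sd) // -ltnNge.
    by move: (leq_trans a1 (leq_trans H a2)); rewrite ltnn.
  have EQ : forall k, 0 < k -> k <= k0 ->
      count (fun x => k <= x) c = (count (fun x => k <= x) d).+1.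
    by move=> k kp kk; rewrite -Rk // -Sk // -addn1; apply: Hle; apply: leq_trans k0g.
  apply/eqP; rewrite eqn_leq; apply/andP; split.
  + case kd: (nth 0 d i) => [|k] //.
    have kp : 0 < k.+1 by [].
    have kk : k.+1 <= k0.
      rewrite -kd; apply: leq_trans (monoN sd hi) (ltnW dlt).
    have E := EQ _ kp kk.
    have H : i < count (fun x => k.+1 <= x) d by rewrite (cntL sd) // kd.
    by rewrite -(cntL sc) // E ltnS.
  + case kc: (nth 0 c i.+1) => [|k] //.
    have kp : 0 < k.+1 by [].
    have kk : k.+1 <= k0 by rewrite -kc; apply: monoN sc (leqW hi).
    have := EQ _ kp kk.
    have : i.+1 < count (fun x => k.+1 <= x) c by rewrite (cntL sc) // kc.
    by move=> H E; rewrite E ltnS (cntL sd) in H.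
Qed.
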